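(* Let $\mathbf{A}\in\mathbb{R}^{M\times N}$, $\mathbf{Y}\in\mathbb{R}^{M\times L}$, and let $(\mathbf{g}(t),\mathbf{V}(t))$, $t\ge0$, evolve under the continuous gradient flow of $\mathcal{L}(\mathbf{g},\mathbf{V})=\Vert\mathbf{Y}-\mathbf{A}((\mathbf{g}^{\odot 2}\mathbf{1}_L)\odot\mathbf{V})\Vert_F^2$ with initialization $\mathbf{g}(0)$ having all entries equal to $\alpha_g$ and $\mathbf{V}(0)=\alpha_V\mathbf{1}_{N\times L}$, where $\alpha_g,\alpha_V$ are small positive scalars. Let $\mathbf{X}(t)=(\mathbf{g}(t)^{\odot 2}\mathbf{1}_L)\odot\mathbf{V}(t)$, $\boldsymbol{\Lambda}(t)=\mathbf{A}^\top(\mathbf{Y}-\mathbf{A}\mathbf{X}(t))$, $\boldsymbol{\lambda}_i(t)$ the $i$-th row of $\boldsymbol{\Lambda}(t)$, and $\hat{\mathbf{x}}_i(t)=\mathbf{X}_{i:}(t)/\Vert\mathbf{X}_{i:}(t)\Vert_2$ if $\Vert\mathbf{X}_{i:}(t)\Vert_2\ne0$ and $\hat{\mathbf{x}}_i(t)=\mathbf{0}$ otherwise. Let $\epsilon=\left|\frac12\Vert\mathbf{g}(t)\Vert_2^2-\Vert\mathbf{V}(t)\Vert_F^2\right|$ (which is independent of $t$). Then for any $t\ge0$ and all $i\in[N]$ with $g_i^2(t)>0$ and $\sum_{m\in[L]}V_{im}^2(t)>0$: if $\langle\boldsymbol{\lambda}_i(t),\hat{\mathbf{x}}_i(t)\rangle\ge0$,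 then $$\frac{d}{dt}\Vert\mathbf{X}_{i:}(t)\Vert_2\le 24\langle\boldsymbol{\lambda}_i(t),\hat{\mathbf{x}}_i(t)\rangle\left(\epsilon+\Vert\mathbf{X}_{i:}(t)\Vert_2^{2/3}\right)^2,\qquad \frac{d}{dt}\Vert\mathbf{X}_{i:}(t)\Vert_2\ge 6\langle\boldsymbol{\lambda}_i(t),\hat{\mathbf{x}}_i(t)\rangle\frac{\Vert\mathbf{X}_{i:}(t)\Vert_2^2}{\epsilon+\Vert\mathbf{X}_{i:}(t)\Vert_2^{2/3}};$$ if $\langle\boldsymbol{\lambda}_i(t),\hat{\mathbf{x}}_i(t)\rangle<0$, then $$\frac{d}{dt}\Vert\mathbf{X}_{i:}(t)\Vert_2\ge 24\langle\boldsymbol{\lambda}_i(t),\hat{\mathbf{x}}_i(t)\rangle\left(\epsilon+\Vert\mathbf{X}_{i:}(t)\Vert_2^{2/3}\right)^2,\qquad \frac{d}{dt}\Vert\mathbf{X}_{i:}(t)\Vert_2\le 6\langle\boldsymbol{\lambda}_i(t),\hat{\mathbf{x}}_i(t)\rangle\frac{\Vert\mathbf{X}_{i:}(t)\Vert_2^2}{\epsilon+\Vert\mathbf{X}_{i:}(t)\Vert_2^{2/3}}.$$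
   Context: $\odot$ is the entrywise product, $\mathbf{1}_L$ the $1\times L$ all-ones row vector, $\mathbf{1}_{N\times L}$ the all-ones matrix, so $X_{ij}=g_i^2V_{ij}$; $\mathbf{X}_{i:}$ denotes the $i$-th row. Gradient flow: $\frac{d}{dt}g_l=-\partial\mathcal{L}/\partial g_l$ and $\frac{d}{dt}V_{lm}=-\partial\mathcal{L}/\partial V_{lm}$ evaluated along the curve. *)

(* Defs.v *)
From HB Require Import structures.
From mathcomp Require Import all_boot all_order all_algebra.
From mathcomp Require Import all_classical all_reals all_analysis.
Set Implicit Arguments. Unset Strict Implicit. Unset Printing Implicit Defensive.
Import Order.TTheory GRing.Theory Num.Theory.
Local Open Scope ring_scope.

Section Defs.
Variable R : realType.

Definition frob2 (m n : nat) (B : 'M[R]_(m, n)) : R :=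
  \sum_(i < m) \sum_(j < n) B i j ^+ 2.

Definition Xof (N L : nat) (g : 'cV[R]_N) (V : 'M[R]_(N, L)) : 'M[R]_(N, L) :=
  \matrix_(i, j) (g i 0 ^+ 2 * V i j).

Definition loss (M N L : nat) (A : 'M[R]_(M, N)) (Y : 'M[R]_(M, L))
  (g : 'cV[R]_N) (V : 'M[R]_(N, L)) : R :=
  frob2 (Y - A *m Xof g V).

Definition dloss_dg (M N L : nat) (A : 'M[R]_(M, N)) (Y : 'M[R]_(M, L))
  (g : 'cV[R]_N) (V : 'M[R]_(N, L)) (l : 'I_N) : R :=
  derive1 (fun s : R => loss A Y (g + s *: delta_mx l 0) V) 0.

Definition dloss_dV (M N L : nat) (A : 'M[R]_(M, N)) (Y : 'M[R]_(M, L))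
  (g : 'cV[R]_N) (V : 'M[R]_(N, L)) (l : 'I_N) (m : 'I_L) : R :=
  derive1 (fun s : R => loss A Y g (V + s *: delta_mx l m)) 0.

Definition gradient_flow (M N L : nat) (A : 'M[R]_(M, N)) (Y : 'M[R]_(M, L))
  (g : R -> 'cV[R]_N) (V : R -> 'M[R]_(N, L)) : Prop :=
  forall t : R, 0 <= t ->
    (forall l : 'I_N,
       is_derive t (1 : R) (fun s => g s l 0) (- dloss_dg A Y (g t) (V t) l)) /\
    (forall (l : 'I_N) (m : 'I_L),
       is_derive t (1 : R) (fun s => V s l m) (- dloss_dV A Y (g t) (V t) l m)).

Definition rownorm (N L : nat) (X : 'M[R]_(N, L)) (i : 'I_N) : R :=
  Num.sqrt (\sum_(j < L) X i j ^+ 2).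

Definition xhat (N L : nat) (X : 'M[R]_(N, L)) (i : 'I_N) : 'rV[R]_L :=
  if rownorm X i != 0 then \row_j (X i j / rownorm X i) else 0.

Definition Lambda (M N L : nat) (A : 'M[R]_(M, N)) (Y : 'M[R]_(M, L))
  (X : 'M[R]_(N, L)) : 'M[R]_(N, L) :=
  A^T *m (Y - A *m X).

Definition inner (L : nat) (u v : 'rV[R]_L) : R := \sum_(j < L) u 0 j * v 0 j.

Definition eps (N L : nat) (g : 'cV[R]_N) (V : 'M[R]_(N, L)) : R :=
  `| 2^-1 * frob2 g - frob2 V |.

End Defs.

(* Main.v *)
Require Import Defs.
From HB Require Import structures.
From mathcomp Require Import all_boot all_order all_algebra.
From mathcomp Require Import all_classical all_reals all_analysis.
From mathcomp Require Import ring lra.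
Set Implicit Arguments. Unset Strict Implicit.
Import Order.TTheory GRing.Theory Num.Theory.
Local Open Scope classical_set_scope.
Local Open Scope ring_scope.
Lemma cube_ge (R : realFieldType) (p x : R) : 0 <= p -> 0 <= x -> x ^+ 3 <= p ^+ 3 -> x <= p.
Proof.
move=> hp hx h; rewrite leNgt; apply/negP => hlt.
have : p ^+ 3 < x ^+ 3 by rewrite ltrXn2r.
by rewrite ltNge h.
Qed.

Lemma alg_ineq (R : realFieldType) (a b e p : R) :
  0 < a -> 0 < b -> 0 <= e -> a / 2 - b <= e -> b - a / 2 <= e -> 0 <= p ->
  p ^+ 3 = a ^+ 2 * b ->
  2 * a ^+ 2 + 8 * a * b <= 24 * (e + p) ^+ 2 /\
  6 * (a ^+ 2 * b) <= (2 * a ^+ 2 + 8 * a * b) * (e + p).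
Proof.
move=> ha hb he h1 h2 hp hp3.
have c1 : a / 8 <= b -> a / 2 <= p.
  move=> hb8; apply: cube_ge => //; first lra.
  rewrite hp3; nra.
have c2 : a / 2 <= b -> 3 * a / 4 <= p.
  move=> hb8; apply: cube_ge => //; first lra.
  rewrite hp3; nra.
have [hb8|hb8] := lerP (a / 8) b.
  have hp2 := c1 hb8.
  have [hb2|hb2] := lerP (a / 2) b.
    have hp4 := c2 hb2.
    have h3 : 0 <= (p - 3 * a / 4) * (a * b) by apply: mulr_ge0; [lra|nra].
    have h4 : 0 <= (p - 3 * a / 4) * (p + 3 * a / 4) by apply: mulr_ge0; lra.
    have h5 : 0 <= (p - 3 * a / 4) * e by apply: mulr_ge0; lra.
    have h6 : 0 <= (e - (b - a / 2)) * a by apply: mulr_ge0; lra.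
    split; nra.
  have h3 : 0 <= (p - a / 2) * (a * b) by apply: mulr_ge0; [lra|nra].
  have h4 : 0 <= (p - a / 2) * (p + a / 2) by apply: mulr_ge0; lra.
  have h5 : 0 <= (p - a / 2) * a by apply: mulr_ge0; lra.
  have h7 : 0 <= (p - a / 2) * e by apply: mulr_ge0; lra.
  have h9 : 0 <= a * (a / 2 - b) by apply: mulr_ge0; lra.
  have h10 : 0 <= (a * a) * (p - a / 2) by apply: mulr_ge0; nra.
  have h11 : 0 <= (a * a) * (a / 2 - b) by apply: mulr_ge0; nra.
  have h12 : 0 <= e * (2 * a ^+ 2 + 8 * a * b) by apply: mulr_ge0; nra.
  have h13 : 0 <= e * p by apply: mulr_ge0; lra.
  split; nra.
have h4 : 0 <= (e - (a / 2 - b)) * (e + (a / 2 - b)) by apply: mulr_ge0; lra.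
have h5 : 0 <= (e - (a / 2 - b)) * a by apply: mulr_ge0; lra.
have h6 : 0 <= p * a by apply: mulr_ge0; lra.
have h7 : 0 <= p * e by apply: mulr_ge0; lra.
have h8 : 0 <= p * b by apply: mulr_ge0; lra.
have h9 : 0 <= (e - 3 * a / 8) * (e + 3 * a / 8) by apply: mulr_ge0; lra.
have h10 : 0 <= (a * a) * (e - 3 * a / 8) by apply: mulr_ge0; nra.
have h11 : 0 <= (a * a) * (a / 8 - b) by apply: mulr_ge0; nra.
have h12 : 0 <= (a * b) * (e + p) by apply: mulr_ge0; nra.
have h13 : 0 <= (a * a) * p by apply: mulr_ge0; nra.
have h14 : 0 <= a * (a / 8 - b) by apply: mulr_ge0; nra.
split; nra.
Qed.
Lemma final_ineq (R : realFieldType) (c K e p r2 : R) :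
  0 < e + p -> K <= 24 * (e + p) ^+ 2 -> 6 * r2 <= K * (e + p) ->
  (0 <= c -> c * K <= 24 * c * (e + p) ^+ 2 /\ 6 * c * (r2 / (e + p)) <= c * K) /\
  (c < 0 -> 24 * c * (e + p) ^+ 2 <= c * K /\ c * K <= 6 * c * (r2 / (e + p))).
Proof.
move=> hep h1 h2.
have hq : 6 * (r2 / (e + p)) <= K.
  by rewrite mulrA ler_pdivrMr.
split=> hc; split; nra.
Qed.
Section H.
Variable R : realType.
Implicit Types f h : R -> R.

Lemma der_add f h (x df dh : R) : is_derive x 1 f df -> is_derive x 1 h dh ->
  is_derive x 1 (fun s => f s + h s) (df + dh).
Proof. move=> H1 H2; exact: (is_deriveD H1 H2). Qed.

Lemma der_sub f h (x df dh : R) : is_derive x 1 f df -> is_derive x 1 h dh ->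
  is_derive x 1 (fun s => f s - h s) (df - dh).
Proof. move=> H1 H2; exact: (is_deriveB H1 H2). Qed.

Lemma der_mul f h (x df dh : R) : is_derive x 1 f df -> is_derive x 1 h dh ->
  is_derive x 1 (fun s => f s * h s) (f x * dh + h x * df).
Proof. move=> H1 H2; exact: (is_deriveM H1 H2). Qed.

Lemma der_cst (k x : R) : is_derive x 1 (fun _ : R => k) 0.
Proof. exact: is_derive_cst. Qed.

Lemma der_id (x : R) : is_derive x 1 (fun s : R => s) 1.
Proof. exact: is_derive_id. Qed.

Lemma der_sum n (F : 'I_n -> R -> R) (x : R) (dF : 'I_n -> R) :
  (forall i, is_derive x 1 (F i) (dF i)) ->
  is_derive x 1 (fun s => \sum_(i < n) F i s) (\sum_(i < n) dF i).
Proof.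
move=> H; have := is_derive_sum H.
have -> : (\sum_(i < n) F i) = (fun s => \sum_(i < n) F i s).
  by apply/funext => s; rewrite fct_sumE.
done.
Qed.

Lemma der_sqrt f (x df : R) : 0 < f x -> is_derive x 1 f df ->
  is_derive x 1 (fun s => Num.sqrt (f s)) ((2 * Num.sqrt (f x))^-1 * df).
Proof.
move=> hp H; have H2 := is_derive1_sqrt hp.
exact: (is_derive1_comp H2 H).
Qed.

Lemma der_val f (x df : R) : is_derive x 1 f df -> derive1 f x = df.
Proof. by move=> H; rewrite derive1E derive_val. Qed.

Lemma der_quad (c0 c1 c2 k : R) (phi : R -> R) : phi 0 = 0 -> is_derive (0:R) 1 phi k ->
  derive1 (fun s => c0 - 2 * phi s * c1 + phi s * phi s * c2) 0 = - 2 * k * c1.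
Proof.
move=> h0 hd.
have H : is_derive (0:R) 1 (fun s => c0 - 2 * phi s * c1 + phi s * phi s * c2) _ :=
  der_add (der_sub (der_cst c0 0) (der_mul (der_mul (der_cst 2 0) hd) (der_cst c1 0)))
          (der_mul (der_mul hd hd) (der_cst c2 0)).
rewrite (der_val H) h0; ring.
Qed.
End H.
Section L.
Variable R : realType.

Lemma frob2_expand m n (E B : 'M[R]_(m, n)) (phi : R) :
  frob2 (E - phi *: B) =
  frob2 E - 2 * phi * (\sum_(i < m) \sum_(j < n) E i j * B i j) + phi * phi * frob2 B.
Proof.
rewrite /frob2 !mulr_sumr -sumrB -big_split /=; apply: eq_bigr => i _.
rewrite !mulr_sumr -sumrB -big_split /=; apply: eq_bigr => j _.
rewrite !mxE; ring.
Qed.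

Lemma inner_mul M N L (E : 'M[R]_(M, L)) (A : 'M[R]_(M, N)) (C : 'M[R]_(N, L)) :
  \sum_(k < M) \sum_(j < L) E k j * (A *m C) k j =
  \sum_(i < N) \sum_(j < L) (A^T *m E) i j * C i j.
Proof.
transitivity (\sum_(k < M) \sum_(j < L) \sum_(i < N) E k j * (A k i * C i j)).
  by apply: eq_bigr => k _; apply: eq_bigr => j _; rewrite mxE big_distrr.
transitivity (\sum_(i < N) \sum_(j < L) \sum_(k < M) (A k i * E k j) * C i j); last first.
  by apply: eq_bigr => i _; apply: eq_bigr => j _; rewrite !mxE big_distrl /=;
     apply: eq_bigr => k _; rewrite mxE.
rewrite exchange_big /=.
transitivity (\sum_(j < L) \sum_(i < N) \sum_(k < M) E k j * (A k i * C i j)).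
  by apply: eq_bigr => j _; rewrite exchange_big.
rewrite [RHS]exchange_big /=; apply: eq_bigr => j _; apply: eq_bigr => i _.
apply: eq_bigr => k _; ring.
Qed.

Lemma sum_delta N (l : 'I_N) (F : 'I_N -> R) :
  \sum_(i < N) (i == l)%:R * F i = F l.
Proof.
rewrite (bigD1 l) //= eqxx mul1r big1 ?addr0 // => i /negbTE ->; by rewrite mul0r.
Qed.


Lemma dV_eq M N L (A : 'M[R]_(M, N)) (Y : 'M[R]_(M, L)) (g : 'cV[R]_N)
  (V : 'M[R]_(N, L)) l m :
  dloss_dV A Y g V l m = - 2 * (g l 0 ^+ 2 * Lambda A Y (Xof g V) l m).
Proof.
set E := Y - A *m Xof g V.
set C := Xof g (delta_mx l m).
set ip := \sum_(k < M) \sum_(j < L) E k j * (A *m C) k j.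
have feq : (fun s => loss A Y g (V + s *: delta_mx l m)) =
  (fun s => frob2 E - 2 * s * ip + s * s * frob2 (A *m C)).
  apply/funext => s; rewrite /loss -frob2_expand; congr frob2.
  apply/matrixP => i j; rewrite !mxE -addrA -opprD; congr (_ - _).
  rewrite big_distrr -big_split; apply: eq_bigr => k _ /=.
  rewrite /C !mxE; ring.
rewrite /dloss_dV feq (der_quad _ _ _ (k := 1) (phi := fun s => s)) //.
rewrite /ip inner_mul /Lambda -/E.
rewrite (bigD1 l) //= [X in _ * (_ + X)]big1; last first.
  move=> i /negbTE hi; apply: big1 => j _; rewrite /C !mxE hi /=; ring.
rewrite addr0 (bigD1 m) //= [X in _ * (_ + X)]big1; last first.
  move=> j /negbTE hj; rewrite /C !mxE hj eqxx /=; ring.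
rewrite /C !mxE !eqxx /=; ring.
Qed.

Lemma dg_eq M N L (A : 'M[R]_(M, N)) (Y : 'M[R]_(M, L)) (g : 'cV[R]_N)
  (V : 'M[R]_(N, L)) l :
  dloss_dg A Y g V l =
  - 4 * (g l 0 * \sum_(j < L) Lambda A Y (Xof g V) l j * V l j).
Proof.
set E := Y - A *m Xof g V.
set C := \matrix_(i < N, j < L) ((i == l)%:R * V i j).
set ip := \sum_(k < M) \sum_(j < L) E k j * (A *m C) k j.
have feq : (fun s => loss A Y (g + s *: delta_mx l 0) V) =
  (fun s => frob2 E - 2 * (2 * s * g l 0 + s * s) * ip
     + (2 * s * g l 0 + s * s) * (2 * s * g l 0 + s * s) * frob2 (A *m C)).
  apply/funext => s; rewrite /loss -frob2_expand; congr frob2.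
  apply/matrixP => i j; rewrite !mxE -addrA -opprD; congr (_ - _).
  rewrite big_distrr -big_split; apply: eq_bigr => k _ /=.
  rewrite /C !mxE.
  case: (eqVneq k l) => [->|hne]; first by rewrite !eqxx /=; ring.
  by rewrite /=; ring.
have hd : is_derive (0:R) 1 (fun s => 2 * s * g l 0 + s * s) (2 * g l 0).
  have H := der_add (der_mul (der_mul (der_cst 2 (0:R)) (der_id (0:R))) (der_cst (g l 0) 0))
            (der_mul (der_id (0:R)) (der_id 0)).
  case: H => H1 H2; apply: DeriveDef => //; rewrite H2; ring.
have h0 : (fun s => 2 * s * g l 0 + s * s) 0 = 0 by rewrite /=; ring.
rewrite /dloss_dg feq (der_quad _ _ _ h0 hd).
rewrite /ip inner_mul /Lambda -/E.
rewrite (bigD1 l) //= [X in _ * (_ + X)]big1; last first.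
  by move=> i /negbTE hi; apply: big1 => j _; rewrite /C !mxE hi /=; ring.
rewrite addr0.
have -> : \sum_(j < L) (A^T *m E) l j * C l j =
          \sum_(j < L) (A^T *m E) l j * V l j.
  by apply: eq_bigr => j _; rewrite /C [in LHS]mxE eqxx /= mul1r.
ring.
Qed.
End L.

Unset Implicit Arguments. Set Strict Implicit.

Theorem lemma5p2 (R : realType) (M N L : nat)
  (A : 'M[R]_(M, N)) (Y : 'M[R]_(M, L))
  (g : R -> 'cV[R]_N) (V : R -> 'M[R]_(N, L)) (alpha_g alpha_V : R) :
  0 < alpha_g -> 0 < alpha_V ->
  g 0 = const_mx alpha_g -> V 0 = const_mx alpha_V ->
  gradient_flow A Y g V ->
  forall t : R, 0 <= t ->
  forall i : 'I_N,
    0 < g t i 0 ^+ 2 -> 0 < \sum_(m < L) V t i m ^+ 2 ->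
    let X := fun s : R => Xof (g s) (V s) in
    let c := inner (row i (Lambda A Y (X t))) (xhat (X t) i) in
    let D := derive1 (fun s : R => rownorm (X s) i) t in
    let e := eps (g t) (V t) in
    let r := rownorm (X t) i in
    (0 <= c ->
       D <= 24 * c * (e + r `^ (2 / 3)) ^+ 2 /\
       6 * c * (r ^+ 2 / (e + r `^ (2 / 3))) <= D) /\
    (c < 0 ->
       24 * c * (e + r `^ (2 / 3)) ^+ 2 <= D /\
       D <= 6 * c * (r ^+ 2 / (e + r `^ (2 / 3)))).
Proof.
move=> hag haV hg0 hV0 hflow t ht i ha hb; cbv zeta.
pose h k s := 2^-1 * (g s k 0 * g s k 0) - \sum_(j < L) V s k j * V s k j.
have hder (k : 'I_N) (s : R) : 0 <= s -> is_derive s 1 (h k) 0.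
  move=> hs; have [Hg HV] := hflow s hs.
  have H := der_sub (der_mul (der_cst (2^-1 : R) s) (der_mul (Hg k) (Hg k)))
     (der_sum (fun j => der_mul (HV k j) (HV k j))).
  case: H => H1 H2; apply: DeriveDef => //; rewrite H2.
  rewrite dg_eq.
  rewrite [X in _ - X = _](eq_bigr (fun j => 4 * (g s k 0 ^+ 2) * (Lambda A Y (Xof (g s) (V s)) k j * V s k j))); last first.
    by move=> j _; rewrite dV_eq; ring.
  rewrite -mulr_sumr; match goal with |- ?a = _ => change (a = (0:R)) end; by field.
have hcst (k : 'I_N) : h k t = h k 0.
  have hd1 : forall x, x \in `]0, t[ -> is_derive x 1 (h k) ((fun _ : R => 0 : R) x).
    move=> x; rewrite in_itv /= => /andP [h1 _]; apply: hder; exact: ltW.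
  have hc1 : {within `[0, t], continuous (h k)}.
    apply: derivable_within_continuous => x; rewrite in_itv /= => /andP [h1 _].
    exact: (@ex_derive _ _ _ _ _ _ _ (hder k x h1)).
  have [x _ Hx] := MVT_segment ht hd1 hc1.
  by move/eqP: Hx; rewrite mul0r subr_eq0 => /eqP.
set del := 2^-1 * (alpha_g * alpha_g) - \sum_(j < L) alpha_V * alpha_V.
have h0v (k : 'I_N) : h k 0 = del.
  by rewrite /h hg0 hV0 mxE /del; congr (_ - _); apply: eq_bigr => j _; rewrite mxE.
have heps : `|h i t| <= eps (g t) (V t).
  rewrite /eps.
  have -> : 2^-1 * frob2 (g t) - frob2 (V t) = \sum_(k < N) h k t.
    rewrite /frob2 mulr_sumr -sumrB; apply: eq_bigr => k _.
    by rewrite big_ord1 /h expr2; congr (_ - _); apply: eq_bigr => j _; rewrite expr2.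
  rewrite (eq_bigr (fun _ => del)); last by move=> k _; rewrite hcst h0v.
  rewrite sumr_const card_ord normrMn hcst h0v -mulr_natr.
  apply: ler_peMr; first exact: normr_ge0.
  rewrite ler1n; case: i {ha hb} => [m hm]; exact: leq_ltn_trans hm.
have [Hg HV] := hflow t ht.
have rE (s : R) : rownorm (Xof (g s) (V s)) i =
    Num.sqrt (\sum_(j < L) (g s i 0 * g s i 0 * V s i j) * (g s i 0 * g s i 0 * V s i j)).
  by rewrite /rownorm; congr Num.sqrt; apply: eq_bigr => j _; rewrite mxE; ring.
have Dfun : (fun s => rownorm (Xof (g s) (V s)) i) = (fun s =>
    Num.sqrt (\sum_(j < L) (g s i 0 * g s i 0 * V s i j) * (g s i 0 * g s i 0 * V s i j))).
  by apply/funext => s; exact: rE.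
set b := \sum_(m < L) V t i m ^+ 2 in hb.
set a := g t i 0 ^+ 2 in ha.
have hG : g t i 0 != 0.
  by move: ha; rewrite /a; apply: contraTneq => ->; rewrite expr0n /= ltxx.
have SE : \sum_(j < L) (g t i 0 * g t i 0 * V t i j) * (g t i 0 * g t i 0 * V t i j) = a ^+ 2 * b.
  by rewrite /b mulr_sumr; apply: eq_bigr => j _; rewrite /a; ring.
have Spos : 0 < \sum_(j < L) (g t i 0 * g t i 0 * V t i j) * (g t i 0 * g t i 0 * V t i j).
  by rewrite SE; apply: mulr_gt0 => //; exact: exprn_gt0.
have sqb : 0 < Num.sqrt b by rewrite sqrtr_gt0.
have sqE : Num.sqrt (a ^+ 2 * b) = a * Num.sqrt b.
  by rewrite sqrtrM ?sqr_ge0 // sqrtr_sqr ger0_norm // ltW.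
set r0 := rownorm (Xof (g t) (V t)) i.
have r0E : r0 = a * Num.sqrt b by rewrite /r0 rE SE sqE.
set P := \sum_(j < L) Lambda A Y (Xof (g t) (V t)) i j * V t i j.
have cE : inner (row i (Lambda A Y (Xof (g t) (V t)))) (xhat (Xof (g t) (V t)) i) = P / Num.sqrt b.
  have rne : r0 != 0 by rewrite r0E mulf_neq0 // gt_eqF.
  rewrite /inner /xhat -/r0 rne /P mulr_suml; apply: eq_bigr => j _.
  rewrite !mxE r0E /a; field.
  by rewrite gt_eqF //= hG.
rewrite cE Dfun (der_val (der_sqrt Spos (der_sum (fun j =>
   der_mul (der_mul (der_mul (Hg i) (Hg i)) (HV i j)) (der_mul (der_mul (Hg i) (Hg i)) (HV i j)))))).
rewrite SE sqE.
rewrite (eq_bigr (fun j => 4 * a ^+ 3 * (Lambda A Y (Xof (g t) (V t)) i j * V t i j)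
   + 16 * a ^+ 2 * P * V t i j ^+ 2)); last first.
  by move=> j _; rewrite dg_eq dV_eq -/P /a; ring.
rewrite big_split /= -!mulr_sumr -/P -/b.
have DK : (2 * (a * Num.sqrt b))^-1 * (4 * a ^+ 3 * P + 16 * a ^+ 2 * P * b) =
    P / Num.sqrt b * (2 * a ^+ 2 + 8 * a * b).
  have sqb2 : Num.sqrt b ^+ 2 = b by rewrite sqr_sqrtr // ltW.
  move: (Num.sqrt b) sqb sqb2 => q hq hq2; rewrite -hq2; field.
  by rewrite !gt_eqF.
rewrite DK.
set e := eps (g t) (V t).
set p := r0 `^ (2 / 3).
have he : `|a / 2 - b| <= e.
  have <- : h i t = a / 2 - b.
    rewrite /h /a /b expr2; congr (_ - _); first by rewrite mulrC.
  exact: heps.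
have he0 : 0 <= e by rewrite /e /eps normr_ge0.
move: he; rewrite ler_norml => /andP [he1 he2].
have r0pos : 0 < r0 by rewrite r0E mulr_gt0.
have hp : 0 < p by rewrite /p powR_gt0.
have r2E : r0 ^+ 2 = a ^+ 2 * b by rewrite r0E exprMn sqr_sqrtr // ltW.
have p3 : p ^+ 3 = a ^+ 2 * b.
  rewrite -r2E /p -powR_mulrn ?powR_ge0 // -powRrM.
  have -> : (2 / 3 * 3%:R : R) = 2%:R by field.
  by rewrite powR_mulrn // ltW.
have he3 : b - a / 2 <= e by lra.
have [A1 A2] := alg_ineq ha hb he0 he2 he3 (ltW hp) p3.
apply: final_ineq.
- lra.
- exact: A1.
- by rewrite r2E.
Qed.
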